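(* Let $\mathcal M(R,F)$ be a quantum matrix algebra of BMW type with matrix of generators $M$. Then for every $n\ge1$, $$K_nM_{\bar n}M_{\overline{n+1}}=M_{\bar n}M_{\overline{n+1}}K_n=\mu^{-2}K_n\,g .$$
   Context: Let $V$ be a complex vector space of dimension $N$ with a fixed basis. For $X\in\mathrm{End}(V\otimes V)$, $X_m$ denotes the operator on $V^{\otimes n}$ acting as $X$ on factors $m,m+1$ and as identity elsewhere; for $Y\in\mathrm{End}(V)$, $Y_m$ acts on factor $m$. $P$ is the flip; $\mathrm{Tr}_{(i)}$ is partial trace. $X$ is skew invertible if there is $\Psi_X$ with $\mathrm{Tr}_{(2)}X_{12}\Psi_{X,23}=\mathrm{Tr}_{(2)}\Psi_{X,12}X_{23}=P_{13}$; $C_X:=\mathrm{Tr}_{(1)}\Psi_{X,12}$, $D_X:=\mathrm{Tr}_{(2)}\Psi_{X,12}$; strictly skew invertible if moreover $C_X$ or $D_X$ is invertible. An R-matrix is an invertible $R$ with $R_1R_2R_1=R_2R_1R_2$. $\{R,F\}$ is compatible if $R_1F_2F_1=F_2F_1R_2$, $R_2F_1F_2=F_1F_2R_1$. Fix $q\in\mathbb C\setminus\{0,\pm1\}$, $\mu\in\mathbb C\setminus\{0,q,-q^{-1}\}$; $R$ is of BMW type if $(qI-R)(q^{-1}I+R)(\mu I-R)=0$ and $K:=\mu^{-1}(q-q^{-1})^{-1}(qI-R)(q^{-1}I+R)$ satisfies $K_2K_1=R_1^{\epsilon}R_2^{\epsilon}K_1$ ($\epsilon=\pm1$), $K_1K_2K_1=K_1$.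 R-trace: $\mathrm{Tr}_{R,(i_1,\dots,i_k)}X:=\mathrm{Tr}_{(i_1,\dots,i_k)}(D_{R,i_1}\cdots D_{R,i_k}X)$. $\eta:=\frac{(q-\mu)(q^{-1}+\mu)}{\mu(q-q^{-1})}$. Quantum matrix algebra of BMW type: $\{R,F\}$ compatible pair of strictly skew invertible R-matrices, $R$ of BMW type; $\mathcal M(R,F)$ is the free algebra $\mathbb C\langle1,M_a^b\rangle_{1\le a,b\le N}$ modulo the entries of $R_1M_{\bar1}M_{\bar2}=M_{\bar1}M_{\bar2}R_1$, where $M=\|M_a^b\|$, $M_{\bar1}:=M_1$, $M_{\bar i}:=F_{i-1}M_{\overline{i-1}}F_{i-1}^{-1}$. The 2-contraction is $g:=\eta^{-1}\mathrm{Tr}_{R,(1,2)}(M_{\bar1}M_{\bar2}K_1)\in\mathcal M(R,F)$. *)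

(* Defs.v *)
From HB Require Import structures.
From mathcomp Require Import all_boot all_order all_algebra.
Set Implicit Arguments. Unset Strict Implicit. Unset Printing Implicit Defensive.
Import GRing.Theory Num.Theory.
Local Open Scope ring_scope.

(* V has dimension N with basis indexed by 'I_N.  A basis vector of V^{(x)k}
   is indexed by a multi-index  i : idx N k  (i l = index in factor l, 0-based).
   An operator on V^{(x)k} with entries in a ring T is a function
   X : idx N k -> idx N k -> T,  X i j = matrix element  X_{i}^{j}
   (row i, column j).  Products are matrix products (order of entries kept,
   which matters when T is noncommutative).  Factor positions are 0-based:
   the paper's factor m is position m-1. *)

Definition idx (N k : nat) := {ffun 'I_k -> 'I_N}.
Definition op (N : nat) (T : Type) (k : nat) := idx N k -> idx N k -> T.

Section Ops.
Variable N : nat.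

Definition opeq (T : Type) k (X Y : op N T k) := forall i j, X i j = Y i j.

Definition opmul (T : pzRingType) k (X Y : op N T k) : op N T k :=
  fun i j => \sum_(l : idx N k) X i l * Y l j.
Definition opid (T : pzRingType) k : op N T k := fun i j => (i == j)%:R.
Definition opadd (T : pzRingType) k (X Y : op N T k) : op N T k :=
  fun i j => X i j + Y i j.
Definition opscale (T : pzRingType) k (c : T) (X : op N T k) : op N T k :=
  fun i j => c * X i j.
Definition opzero (T : pzRingType) k : op N T k := fun _ _ => 0.
Definition opmap (S T : Type) k (f : S -> T) (X : op N S k) : op N T k :=
  fun i j => f (X i j).
Definition opmulr (T : pzRingType) k (X : op N T k) (a : T) : op N T k :=
  fun i j => X i j * a.

Definition pair2 (x y : 'I_N) : idx N 2 :=
  [ffun t : 'I_2 => if val t == 0%N then x else y].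

Definition emb1 (T : pzRingType) k (p : 'I_k) (Y : 'M[T]_N) : op N T k :=
  fun i j => Y (i p) (j p) * ([forall l, (l != p) ==> (i l == j l)] %:R).

(* X_p : X acting on factors p, p+1 of V^{(x)(k+1)}, p : 'I_k *)
Definition emb2 (T : pzRingType) k (p : 'I_k) (X : op N T 2) : op N T k.+1 :=
  let a := widen_ord (leqnSn k) p in
  let b := lift ord0 p in
  fun i j => X (pair2 (i a) (i b)) (pair2 (j a) (j b)) *
             ([forall l, ((l != a) && (l != b)) ==> (i l == j l)] %:R).

Definition flip (T : pzRingType) : op N T 2 :=
  fun i j => ((i ord0 == j ord_max) && (i ord_max == j ord0))%:R.

Definition ins_mid (i : idx N 2) (c : 'I_N) : idx N 3 :=
  [ffun t : 'I_3 => match val t with 0%N => i ord0 | 1%N => c | _ => i ord_max end].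

Definition ptr_mid (T : pzRingType) (Z : op N T 3) : op N T 2 :=
  fun i j => \sum_(c : 'I_N) Z (ins_mid i c) (ins_mid j c).

Definition trC (T : pzRingType) (Psi : op N T 2) : 'M[T]_N :=
  \matrix_(a, b) \sum_(c : 'I_N) Psi (pair2 c a) (pair2 c b).
Definition trD (T : pzRingType) (Psi : op N T 2) : 'M[T]_N :=
  \matrix_(a, b) \sum_(c : 'I_N) Psi (pair2 a c) (pair2 b c).

Notation "X '_1'" := (emb2 (ord0 : 'I_2) X) (at level 2).
Notation "X '_2'" := (emb2 (ord_max : 'I_2) X) (at level 2).

Definition skew_inv (T : pzRingType) (X Psi : op N T 2) :=
  opeq (ptr_mid (opmul X _1 Psi _2)) (@flip T) /\
  opeq (ptr_mid (opmul Psi _1 X _2)) (@flip T).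

Definition strictly_skew_invertible (K : comUnitRingType) (X : op N K 2) :=
  exists Psi, skew_inv X Psi /\ (trC Psi \in unitmx \/ trD Psi \in unitmx).

Definition op_inverse (T : pzRingType) k (X Xinv : op N T k) :=
  opeq (opmul X Xinv) (@opid T k) /\ opeq (opmul Xinv X) (@opid T k).

Definition R_matrix (T : pzRingType) (R Rinv : op N T 2) :=
  op_inverse R Rinv /\
  opeq (opmul (opmul R _1 R _2) R _1) (opmul (opmul R _2 R _1) R _2).

Definition compatible (T : pzRingType) (R F : op N T 2) :=
  opeq (opmul (opmul R _1 F _2) F _1) (opmul (opmul F _2 F _1) R _2) /\
  opeq (opmul (opmul R _2 F _1) F _2) (opmul (opmul F _1 F _2) R _1).

Definition Kop (K : fieldType) (q mu : K) (R : op N K 2) : op N K 2 :=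
  opscale ((mu^-1) * (q - q^-1)^-1)
    (opmul (opadd (opscale q (@opid K 2)) (opscale (-1) R))
           (opadd (opscale q^-1 (@opid K 2)) R)).

Definition BMW_type (K : fieldType) (q mu : K) (R Rinv : op N K 2) :=
  let KK := Kop q mu R in
  opeq (opmul (opmul (opadd (opscale q (@opid K 2)) (opscale (-1) R))
                     (opadd (opscale q^-1 (@opid K 2)) R))
              (opadd (opscale mu (@opid K 2)) (opscale (-1) R)))
       (@opzero K 2) /\
  opeq (opmul KK _2 KK _1) (opmul (opmul R _1 R _2) KK _1) /\
  opeq (opmul KK _2 KK _1) (opmul (opmul Rinv _1 Rinv _2) KK _1) /\
  opeq (opmul (opmul KK _1 KK _2) KK _1) KK _1.

Definition eta (K : fieldType) (q mu : K) : K :=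
  (q - mu) * (q^-1 + mu) / (mu * (q - q^-1)).

Section QMA.
Variables (K : fieldType) (A : algType K).
Variables (F Finv : op N K 2) (M : 'M[A]_N).

Definition inA (c : K) : A := c%:A.

(* M_{\bar (j+1)} on V^{(x)(k+1)}  (0-based j):
   M_{\bar 1} = M_1,  M_{\bar i} = F_{i-1} M_{\bar (i-1)} F_{i-1}^{-1} *)
Fixpoint Mbar (k : nat) (j : nat) : op N A k.+1 :=
  match j with
  | 0%N => emb1 ord0 M
  | j'.+1 =>
      match (insub j' : option 'I_k) with
      | Some p => opmul (opmul (emb2 p (opmap inA F)) (Mbar j'))
                        (emb2 p (opmap inA Finv))
      | None => @opzero A k.+1
      end
  end.
Arguments Mbar : clear implicits.

Definition Rtrace12 (DR : 'M[K]_N) (X : op N A 2) : A :=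
  let DA := map_mx inA DR in
  \sum_(i : idx N 2)
     opmul (opmul (emb1 (ord0 : 'I_2) DA) (emb1 (ord_max : 'I_2) DA)) X i i.

Definition QMA_relation (R : op N K 2) :=
  opeq (opmul (emb2 (ord0 : 'I_1) (opmap inA R)) (opmul (Mbar 1 0) (Mbar 1 1)))
       (opmul (opmul (Mbar 1 0) (Mbar 1 1)) (emb2 (ord0 : 'I_1) (opmap inA R))).

Definition gcontr (q mu : K) (R PsiR : op N K 2) : A :=
  (eta q mu)^-1 *: Rtrace12 (trD PsiR)
     (opmul (opmul (Mbar 1 0) (Mbar 1 1))
            (emb2 (ord0 : 'I_1) (opmap inA (Kop q mu R)))).

End QMA.
End Ops.
Arguments Mbar {N K A} F Finv M k j _ _.

(* Main.v *)
Require Import Defs.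
From HB Require Import structures.
From mathcomp Require Import all_boot all_order all_algebra.
Import GRing.Theory Num.Theory.
Local Open Scope ring_scope.
From mathcomp Require Import zify ring.
From Stdlib Require Import FunctionalExtensionality.
Set Implicit Arguments. Unset Strict Implicit. Unset Printing Implicit Defensive.

Section Window.
Variable N : nat.

Definition inwin (p w : nat) (l : nat) : bool := (p <= l)%N && (l < p + w)%N.

Definition win k w p (i : idx N k.+1) : idx N w := [ffun t : 'I_w => i (inord (p + t))].
Definition outeq k w p (i j : idx N k.+1) : bool :=
  [forall l : 'I_k.+1, inwin p w l || (i l == j l)].
Definition splice k w p (i : idx N k.+1) (m : idx N w) : idx N k.+1 :=
  [ffun l : 'I_k.+1 => if (p <= l)%N then
     (match (insub (l - p)%N : option 'I_w) with Some t => m t | None => i l end)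
     else i l].

Arguments win {k} w p i. Arguments outeq {k} w p i j. Arguments splice {k w} p i m.
Variables (k w p : nat).
Hypothesis Hk : (p + w <= k.+1)%N.
Implicit Types (i j : idx N k.+1) (m : idx N w).

Lemma inordpK (t : 'I_w) : ((inord (p + t) : 'I_k.+1) : nat) = (p + t)%N.
Proof. rewrite inordK //; have := ltn_ord t; lia. Qed.

Lemma splice_in i m (t : 'I_w) : splice p i m (inord (p + t)) = m t.
Proof.
rewrite /splice ffunE inordpK leq_addr addKn.
by rewrite valK.
Qed.

Lemma splice_out i m (l : 'I_k.+1) : ~~ inwin p w l -> splice p i m l = i l.
Proof.
rewrite /inwin /splice ffunE => H.
case: ifP => // Hp.
rewrite insubN //; move: H; rewrite Hp /=; lia.
Qed.

Lemma inwin_ex (l : 'I_k.+1) : inwin p w l -> exists t : 'I_w, l = inord (p + t).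
Proof.
rewrite /inwin => /andP [H1 H2].
have Ht : (l - p < w)%N by lia.
exists (Ordinal Ht); apply: val_inj => /=; rewrite inordK /=; lia.
Qed.

Lemma win_splice i m : win w p (splice p i m) = m.
Proof. by apply/ffunP => t; rewrite ffunE splice_in. Qed.

Lemma outeq_splice i m : outeq w p i (splice p i m).
Proof.
apply/forallP => l; case H: (inwin p w l) => //=.
by rewrite splice_out ?H.
Qed.

Lemma splice_win i (l : idx N k.+1) : outeq w p i l -> splice p i (win w p l) = l.
Proof.
move=> /forallP Ho; apply/ffunP => x.
case H: (inwin p w x).
- by case: (inwin_ex H) => t ->; rewrite splice_in ffunE.
- rewrite splice_out ?H //; have := Ho x; rewrite H /=; by move/eqP.
Qed.

Lemma outeq_refl i : outeq w p i i.
Proof. by apply/forallP => l; rewrite eqxx orbT. Qed.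

Lemma outeq_sym i j : outeq w p i j = outeq w p j i.
Proof.
by apply/forallP/forallP => H l; have := H l; rewrite eq_sym.
Qed.

Lemma outeq_trans i j (l : idx N k.+1) : outeq w p i j -> outeq w p j l -> outeq w p i l.
Proof.
move=> /forallP H1 /forallP H2; apply/forallP => x.
have := H1 x; have := H2 x.
by case: (inwin p w x) => //= /eqP -> /eqP ->.
Qed.

Lemma outeq_trans2 i j (l : idx N k.+1) : outeq w p i j -> outeq w p j l = outeq w p i l.
Proof.
move=> H; apply/idP/idP; first exact: outeq_trans.
by move=> H2; apply: outeq_trans H2; rewrite outeq_sym.
Qed.

Lemma sum_outeq (T : pzRingType) (i : idx N k.+1) (F : idx N k.+1 -> T) :
  \sum_(l : idx N k.+1) F l * (outeq w p i l)%:R = \sum_(m : idx N w) F (splice p i m).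
Proof.
rewrite (eq_bigr (fun l => if outeq w p i l then F l else 0)); last first.
  by move=> l _; case: ifP; rewrite ?mulr1 ?mulr0.
rewrite -big_mkcond /=.
rewrite (reindex_onto (splice p i) (win w p) (@splice_win i)) /=.
apply: eq_bigl => m; by rewrite outeq_splice win_splice eqxx.
Qed.

End Window.

Arguments win {N k} w p i. Arguments outeq {N k} w p i j. Arguments splice {N k w} p i m.

Lemma natr_commr (T : pzRingType) (n : nat) (x : T) : n%:R * x = x * n%:R.
Proof. by rewrite (commr_nat x n). Qed.

Lemma opext N T k (X Y : op N T k) : opeq X Y -> X = Y.
Proof. move=> H; do 2 (apply: functional_extensionality => ?); exact: H. Qed.

Section Emb.
Variables (N : nat) (T : pzRingType).

Definition embw k w p (X : op N T w) : op N T k.+1 :=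
  fun i j => X (win w p i) (win w p j) * (outeq w p i j)%:R.
Arguments embw k {w} p X _ _.

Variables (k w p : nat).
Hypothesis Hk : (p + w <= k.+1)%N.

Lemma embw_mul (X Y : op N T w) :
  embw k p (opmul X Y) = opmul (embw k p X) (embw k p Y).
Proof.
apply: opext => i j; rewrite /embw /opmul.
rewrite (eq_bigr (fun l => (X (win w p i) (win w p l) * Y (win w p l) (win w p j)
   * (outeq w p l j)%:R) * (outeq w p i l)%:R)); last first.
  by move=> l _; rewrite -!mulrA; congr (_ * _); rewrite natr_commr -!mulrA.
rewrite sum_outeq // mulr_suml; apply: eq_bigr => m _.
by rewrite win_splice // (outeq_trans2 _ (outeq_splice Hk i m)).
Qed.

Lemma embw_id : embw k p (@opid N T w) = @opid N T k.+1.
Proof.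
apply: opext => i j; rewrite /embw /opid -natrM mulnb; do 2 apply: congr1.
apply/andP/eqP => [[/eqP Hw Ho]|->]; last by rewrite outeq_refl.
by rewrite -(splice_win Hk Ho) -Hw splice_win // outeq_refl.
Qed.

Lemma embw_add (X Y : op N T w) :
  embw k p (opadd X Y) = opadd (embw k p X) (embw k p Y).
Proof. by apply: opext => i j; rewrite /embw /opadd mulrDl. Qed.

Lemma embw_scale c (X : op N T w) :
  embw k p (opscale c X) = opscale c (embw k p X).
Proof. by apply: opext => i j; rewrite /embw /opscale mulrA. Qed.

Lemma embw_zero : embw k p (@opzero N T w) = @opzero N T k.+1.
Proof. by apply: opext => i j; rewrite /embw /opzero mul0r. Qed.

End Emb.
Arguments embw {N T} k {w} p X _ _.

Lemma sum_delta (T : pzRingType) (I : finType) (F : I -> T) (m0 : I) :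
  \sum_(m : I) F m * (m == m0)%:R = F m0.
Proof.
rewrite (bigD1 m0) //= eqxx mulr1 big1 ?addr0 // => m /negbTE ->; by rewrite mulr0.
Qed.

Section EmbComp.
Variables (N : nat) (T : pzRingType).

Lemma embw_full k (X : op N T k.+1) : embw k 0 X = X.
Proof.
apply: opext => i j; rewrite /embw.
have E : forall l : idx N k.+1, win k.+1 0 l = l.
  by move=> l; apply/ffunP => t; rewrite ffunE add0n; congr (l _); apply: val_inj; rewrite /= inordK.
rewrite !E; have -> : outeq k.+1 0 i j by apply/forallP => l; rewrite /inwin /= ltn_ord.
by rewrite mulr1.
Qed.

Variables (k v p p' w' : nat).
Hypothesis Hk : (p + v.+1 <= k.+1)%N.
Hypothesis Hv : (p' + w' <= v.+1)%N.

Lemma win_win (i : idx N k.+1) : win w' p' (win v.+1 p i) = win w' (p + p') i.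
Proof.
apply/ffunP => t; rewrite !ffunE; congr (i _); apply: val_inj.
have E1 : ((inord (p' + t) : 'I_v.+1) : nat) = (p' + t)%N.
  by rewrite inordK //; have := ltn_ord t; lia.
by rewrite /= E1 addnA.
Qed.

Lemma outeq_comp (i j : idx N k.+1) :
  outeq w' p' (win v.+1 p i) (win v.+1 p j) && outeq v.+1 p i j = outeq w' (p + p') i j.
Proof.
apply/andP/forallP => [[/forallP H1 /forallP H2] l|H].
- case Hl: (inwin (p + p') w' l) => //=.
  case Hl2: (inwin p v.+1 l).
  + case: (inwin_ex Hk Hl2) => t Et.
    have := H1 t; rewrite !ffunE -Et.
    have -> // : inwin p' w' t = false.
    move: Hl; rewrite Et /inwin inordpK //; lia.
  + by have := H2 l; rewrite Hl2.
- split; apply/forallP => l.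
  + case Hl: (inwin p' w' l) => //=; rewrite !ffunE.
    have := H (inord (p + l)); have -> // : inwin (p + p') w' (inord (p + l) : 'I_k.+1) = false.
    move: Hl; rewrite /inwin (inordpK Hk); lia.
  + case Hl: (inwin p v.+1 l) => //=.
    have := H l; have -> // : inwin (p + p') w' l = false.
    move: Hl; rewrite /inwin; lia.
Qed.

Lemma embw_comp (X : op N T w') : embw k p (embw v p' X) = embw k (p + p') X.
Proof.
apply: opext => i j; rewrite /embw -mulrA -natrM mulnb outeq_comp !win_win //.
Qed.
End EmbComp.

Section EmbDisj.
Variables (N : nat) (T : pzRingType).
Variables (k p w p' w' : nat).
Hypothesis Hk1 : (p + w <= k.+1)%N.
Hypothesis Hk2 : (p' + w' <= k.+1)%N.
Hypothesis Hd : ((p + w <= p') || (p' + w' <= p))%N.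

Definition oe2 (i j : idx N k.+1) :=
  [forall l : 'I_k.+1, inwin p w l || inwin p' w' l || (i l == j l)].

Lemma win_splice_oth (i : idx N k.+1) (m : idx N w) :
  win w' p' (splice p i m) = win w' p' i.
Proof.
apply/ffunP => t; rewrite ffunE [RHS]ffunE splice_out //.
rewrite /inwin (inordpK Hk2); have := ltn_ord t; lia.
Qed.

Lemma outeq_splice_oth (i j : idx N k.+1) (m : idx N w) :
  outeq w' p' (splice p i m) j = (m == win w p j) && oe2 i j.
Proof.
apply/forallP/andP => [H|[/eqP Hm /forallP H2] l].
- split.
  + apply/eqP/ffunP => t; have := H (inord (p + t)).
    have -> /= : inwin p' w' (inord (p + t) : 'I_k.+1) = false.
      rewrite /inwin (inordpK Hk1); have := ltn_ord t; lia.
    by rewrite splice_in // ffunE => /eqP.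
  + apply/forallP => l; case Hl: (inwin p w l) => //; case Hl': (inwin p' w' l) => //=.
    by have := H l; rewrite Hl' /= splice_out ?Hl.
- case Hl': (inwin p' w' l) => //=.
  case Hl: (inwin p w l).
  + case: (inwin_ex Hk1 Hl) => t ->; rewrite splice_in // Hm ffunE //.
  + by rewrite splice_out ?Hl //; have := H2 l; rewrite Hl Hl'.
Qed.

Lemma prod_disj (X : op N T w) (Y : op N T w') (i j : idx N k.+1) :
  opmul (embw k p X) (embw k p' Y) i j =
  X (win w p i) (win w p j) * Y (win w' p' i) (win w' p' j) * (oe2 i j)%:R.
Proof.
rewrite /opmul /embw.
rewrite (eq_bigr (fun l => (X (win w p i) (win w p l) * (Y (win w' p' l) (win w' p' j)
   * (outeq w' p' l j)%:R)) * (outeq w p i l)%:R)); last first.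
  by move=> l _; rewrite -!mulrA (natr_commr (outeq w p i l)) -!mulrA.
rewrite sum_outeq //.
rewrite (eq_bigr (fun m => (X (win w p i) m * Y (win w' p' i) (win w' p' j) * (oe2 i j)%:R)
   * (m == win w p j)%:R)); last first.
  move=> m _; rewrite win_splice_oth outeq_splice_oth -mulnb natrM.
  by rewrite win_splice // (natr_commr (m == win w p j)) !mulrA.
by rewrite sum_delta.
Qed.
End EmbDisj.

Lemma embw_comm N (T : pzRingType) k p w p' w' (X : op N T w) (Y : op N T w') :
  (p + w <= k.+1)%N -> (p' + w' <= k.+1)%N -> ((p + w <= p') || (p' + w' <= p))%N ->
  (forall a b c d, X a b * Y c d = Y c d * X a b) ->
  opmul (embw k p X) (embw k p' Y) = opmul (embw k p' Y) (embw k p X).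
Proof.
move=> H1 H2 Hd Hc; apply: opext => i j.
rewrite prod_disj // prod_disj //; last by rewrite orbC.
have -> : oe2 p' w' p w i j = oe2 p w p' w' i j.
  by apply: eq_forallb => l; rewrite (orbC (inwin p' w' l)).
by rewrite Hc.
Qed.

Arguments win {N k} w p i. Arguments outeq {N k} w p i j. Arguments splice {N k w} p i m.
Arguments embw {N T} k {w} p X _ _.

Section Basic.
Variables (N : nat) (T : pzRingType) (k : nat).
Implicit Types X Y Z : op N T k.

Lemma opmulA X Y Z : opmul (opmul X Y) Z = opmul X (opmul Y Z).
Proof.
apply: opext => i j; rewrite /opmul.
rewrite (eq_bigr (fun l => \sum_m X i m * Y m l * Z l j)); last by move=> l _; rewrite mulr_suml.
rewrite exchange_big; apply: eq_bigr => m _; rewrite mulr_sumr; apply: eq_bigr => l _.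
by rewrite mulrA.
Qed.

Lemma opmul1l X : opmul (@opid N T k) X = X.
Proof.
apply: opext => i j; rewrite /opmul /opid.
rewrite (bigD1 i) //= eqxx mul1r big1 ?addr0 // => l /negbTE.
by rewrite eq_sym => ->; rewrite mul0r.
Qed.

Lemma opmul1r X : opmul X (@opid N T k) = X.
Proof.
apply: opext => i j; rewrite /opmul /opid.
rewrite (bigD1 j) //= eqxx mulr1 big1 ?addr0 // => l /negbTE ->; by rewrite mulr0.
Qed.

Lemma opmulDl X Y Z : opmul (opadd X Y) Z = opadd (opmul X Z) (opmul Y Z).
Proof. apply: opext => i j; rewrite /opmul /opadd -big_split; apply: eq_bigr => l _; exact: mulrDl. Qed.

Lemma opmulDr X Y Z : opmul X (opadd Y Z) = opadd (opmul X Y) (opmul X Z).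
Proof. apply: opext => i j; rewrite /opmul /opadd -big_split; apply: eq_bigr => l _; exact: mulrDr. Qed.

Lemma opmulZl c X Y : opmul (opscale c X) Y = opscale c (opmul X Y).
Proof. apply: opext => i j; rewrite /opmul /opscale mulr_sumr; apply: eq_bigr => l _; by rewrite mulrA. Qed.

Lemma opmulZr c X Y : (forall x : T, c * x = x * c) ->
  opmul X (opscale c Y) = opscale c (opmul X Y).
Proof.
move=> Hc; apply: opext => i j; rewrite /opmul /opscale mulr_sumr; apply: eq_bigr => l _.
by rewrite mulrA -Hc mulrA.
Qed.

Lemma opscaleA a b X : opscale a (opscale b X) = opscale (a * b) X.
Proof. by apply: opext => i j; rewrite /opscale mulrA. Qed.

Lemma opscale1 X : opscale 1 X = X.
Proof. by apply: opext => i j; rewrite /opscale mul1r. Qed.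

Lemma opscaleDr c X Y : opscale c (opadd X Y) = opadd (opscale c X) (opscale c Y).
Proof. by apply: opext => i j; rewrite /opscale /opadd mulrDr. Qed.

Lemma opscaleDl a b X : opscale (a + b) X = opadd (opscale a X) (opscale b X).
Proof. by apply: opext => i j; rewrite /opscale /opadd mulrDl. Qed.

Lemma opaddC X Y : opadd X Y = opadd Y X.
Proof. by apply: opext => i j; rewrite /opadd addrC. Qed.

Lemma opaddA X Y Z : opadd X (opadd Y Z) = opadd (opadd X Y) Z.
Proof. by apply: opext => i j; rewrite /opadd addrA. Qed.

Lemma opmul0l X : opmul (@opzero N T k) X = @opzero N T k.
Proof. by apply: opext => i j; rewrite /opmul big1 // => l _; rewrite mul0r. Qed.

Lemma opmul0r X : opmul X (@opzero N T k) = @opzero N T k.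
Proof. by apply: opext => i j; rewrite /opmul big1 // => l _; rewrite mulr0. Qed.

Lemma opscale0 X : opscale 0 X = @opzero N T k.
Proof. by apply: opext => i j; rewrite /opscale mul0r. Qed.

Lemma opscalez c : opscale c (@opzero N T k) = @opzero N T k.
Proof. by apply: opext => i j; rewrite /opscale mulr0. Qed.

Lemma opadd0r X : opadd X (@opzero N T k) = X.
Proof. by apply: opext => i j; rewrite /opadd addr0. Qed.
Lemma opadd0l X : opadd (@opzero N T k) X = X.
Proof. by apply: opext => i j; rewrite /opadd add0r. Qed.

End Basic.

Section EmbRel.
Variables (N : nat) (T : pzRingType).

Lemma emb2E k (p : 'I_k) (X : op N T 2) : emb2 p X = embw k p X.
Proof.
apply: opext => i j; rewrite /emb2 /embw.
have Hw : forall l : idx N k.+1,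
    pair2 (l (widen_ord (leqnSn k) p)) (l (lift ord0 p)) = win 2 p l.
  move=> l; apply/ffunP => t; rewrite !ffunE; case: t => [[|[|t]] Ht] //=.
  - by congr (l _); apply: val_inj; rewrite /= inordK ?addn0 //; have := ltn_ord p; lia.
  - by congr (l _); apply: val_inj; rewrite /= inordK /bump //= ?addn1; have := ltn_ord p; lia.
rewrite !Hw; do 3 apply: congr1; apply: eq_forallb => l.
rewrite /inwin -!(inj_eq val_inj) /= /bump /=.
case: (l =P p :> nat) => [->|/eqP H1] /=; first by rewrite leqnn addn2 ltnS leqnSn.
case: (l =P p.+1 :> nat) => [->|/eqP H2] /=; first by rewrite leqnSn addn2 ltnSn.
have -> : ((p <= l) && (l < p + 2))%N = false by lia.
by [].
Qed.

Definition m1 (Y : 'M[T]_N) : op N T 1 := fun i j => Y (i ord0) (j ord0).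

Lemma emb1E k (p : 'I_k.+1) (Y : 'M[T]_N) : emb1 p Y = embw k p (m1 Y).
Proof.
apply: opext => i j; rewrite /emb1 /embw /m1 !ffunE.
have -> : (inord (p + @ord0 0) : 'I_k.+1) = p.
  by apply: val_inj; rewrite /= addn0 inordK.
do 3 apply: congr1; apply: eq_forallb => l.
rewrite /inwin -!(inj_eq val_inj) /= addn1 ltnS.
case: (l =P p :> nat) => [->|/eqP H1] /=; first by rewrite leqnn.
have -> : ((p <= l) && (l <= p))%N = false by lia.
by [].
Qed.
End EmbRel.

Section OpMap.
Variables (N : nat) (C : fieldType) (A : algType C).
Local Notation iA := (@inA C A).

Lemma inA_mul (x y : C) : iA (x * y) = iA x * iA y.
Proof. by rewrite /inA mulr_algl scalerA. Qed.
Lemma inA_add (x y : C) : iA (x + y) = iA x + iA y.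
Proof. by rewrite /inA scalerDl. Qed.
Lemma inA_nat (n : nat) : iA n%:R = n%:R.
Proof. by rewrite /inA scaler_nat. Qed.
Lemma inA_sum (I : finType) (F : I -> C) : iA (\sum_i F i) = \sum_i iA (F i).
Proof. by rewrite /inA scaler_suml. Qed.
Lemma inA_central (x : C) (a : A) : iA x * a = a * iA x.
Proof. by rewrite /inA mulr_algl mulr_algr. Qed.
Lemma inA0 : iA 0 = 0.
Proof. by rewrite /inA scale0r. Qed.

Variable k : nat.
Implicit Types X Y : op N C k.

Lemma opmap_mul X Y : opmap iA (opmul X Y) = opmul (opmap iA X) (opmap iA Y).
Proof. apply: opext => i j; rewrite /opmap /opmul inA_sum; apply: eq_bigr => l _; exact: inA_mul. Qed.
Lemma opmap_add X Y : opmap iA (opadd X Y) = opadd (opmap iA X) (opmap iA Y).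
Proof. apply: opext => i j; exact: inA_add. Qed.
Lemma opmap_scale c X : opmap iA (opscale c X) = opscale (iA c) (opmap iA X).
Proof. apply: opext => i j; exact: inA_mul. Qed.
Lemma opmap_id : opmap iA (@opid N C k) = @opid N A k.
Proof. apply: opext => i j; exact: inA_nat. Qed.
Lemma opmap_zero : opmap iA (@opzero N C k) = @opzero N A k.
Proof. apply: opext => i j; exact: inA0. Qed.

Definition central (X : op N A k) := forall i j (a : A), X i j * a = a * X i j.

Lemma central_map X : central (opmap iA X).
Proof. move=> i j a; exact: inA_central. Qed.

End OpMap.

Lemma opmap_embw N (C : fieldType) (A : algType C) k w p (X : op N C w) :
  opmap (@inA C A) (embw k p X) = embw k p (opmap (@inA C A) X).
Proof. apply: opext => i j; by rewrite /opmap /embw inA_mul inA_nat. Qed.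

Lemma central_embw N (C : fieldType) (A : algType C) k w p (X : op N A w) :
  central X -> central (embw k p X).
Proof.
move=> H i j a; by rewrite /embw -mulrA natr_commr mulrA H -mulrA.
Qed.

Section Emb2.
Variables (N : nat) (T : pzRingType) (k : nat) (p : 'I_k).
Let Hp : (p + 2 <= k.+1)%N. Proof. have := ltn_ord p; lia. Qed.
Lemma emb2_mul (X Y : op N T 2) : emb2 p (opmul X Y) = opmul (emb2 p X) (emb2 p Y).
Proof. by rewrite !emb2E embw_mul. Qed.
Lemma emb2_add (X Y : op N T 2) : emb2 p (opadd X Y) = opadd (emb2 p X) (emb2 p Y).
Proof. by rewrite !emb2E embw_add. Qed.
Lemma emb2_scale c (X : op N T 2) : emb2 p (opscale c X) = opscale c (emb2 p X).
Proof. by rewrite !emb2E embw_scale. Qed.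
Lemma emb2_id : emb2 p (@opid N T 2) = @opid N T k.+1.
Proof. by rewrite !emb2E embw_id. Qed.
End Emb2.

Arguments win {N k} w p i. Arguments outeq {N k} w p i j. Arguments splice {N k w} p i m.
Arguments embw {N T} k {w} p X _ _.

Local Infix "*o" := opmul (at level 40, left associativity).

Section Lin.
Variables (N : nat) (C : comPzRingType).
Definition lin k (a b c : C) (X : op N C k) :=
  opadd (opscale a (@opid N C k)) (opadd (opscale b X) (opscale c (X *o X))).

Lemma opmulZrC k c (X Y : op N C k) : X *o opscale c Y = opscale c (X *o Y).
Proof. by apply: opmulZr => x; rewrite mulrC. Qed.

Lemma lin_transfer k a b c (X Y G : op N C k) :
  X *o G = G *o Y -> lin a b c X *o G = G *o lin a b c Y.
Proof.
move=> H; rewrite /lin !opmulDl !opmulDr !opmulZl !opmulZrC opmul1l opmul1r.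
by rewrite opmulA H -[X *o (G *o Y)]opmulA H opmulA.
Qed.

Lemma emb2_lin k (p : 'I_k) a b c (X : op N C 2) :
  emb2 p (lin a b c X) = lin a b c (emb2 p X).
Proof. by rewrite /lin !emb2_add !emb2_scale emb2_mul emb2_id. Qed.
End Lin.

Section Scalar.
Variables (N : nat) (C : fieldType) (q mu : C) (R Rinv PsiR : op N C 2).
Hypothesis Hq0 : q != 0.
Hypothesis Hqq : q - q^-1 != 0.
Hypothesis Hmu : mu != 0.
Hypothesis HRm : R_matrix R Rinv.
Hypothesis Hskew : skew_inv R PsiR.
Hypothesis HBMW : BMW_type q mu R Rinv.

Lemma Hqq2 : q * q - 1 != 0.
Proof.
have -> : q * q - 1 = q * (q - q^-1) by field.
by rewrite mulf_neq0.
Qed.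

Local Notation I2 := (@opid N C 2).
Local Notation I3 := (@opid N C 3).
Local Notation K := (Kop q mu R).
Local Notation e1 := (emb2 (ord0 : 'I_2)).
Local Notation e2 := (emb2 (ord_max : 'I_2)).


Lemma Kexp : K = lin (mu^-1 * (q - q^-1)^-1) (mu^-1 * (q - q^-1)^-1 * (q - q^-1))
                      (- (mu^-1 * (q - q^-1)^-1)) R.
Proof.
apply: opext => i j; rewrite /Kop /lin /opscale /opmul /opadd /opid.
rewrite (eq_bigr (fun l => q * q^-1 * ((i == l)%:R * (l == j)%:R) + q * (R l j * (l == i)%:R)
   + (- q^-1) * (R i l * (l == j)%:R) + - (R i l * R l j))); last first.
  by move=> l _; rewrite (eq_sym l i); ring.
rewrite !big_split /= -!mulr_sumr sumrN !sum_delta.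
by field; rewrite Hq0 Hqq2 Hmu.
Qed.

Let s := mu^-1 * (q - q^-1)^-1.
Lemma KR : K *o R = opscale mu K.
Proof.
have H1 := opext HBMW.1.
have E : K *o opadd (opscale mu I2) (opscale (-1) R) = @opzero N C 2.
  by rewrite /Kop opmulZl H1 opscalez.
rewrite opmulDr !opmulZrC opmul1r in E.
apply: opext => i j; have := congr1 (fun Z => Z i j) E.
rewrite /opadd /opscale /opzero => /eqP; rewrite mulN1r addr_eq0 opprK => /eqP ->.
by [].
Qed.

Lemma RK : R *o K = opscale mu K.
Proof. by rewrite -KR Kexp (lin_transfer _ _ _ (erefl (R *o R))). Qed.

Lemma Rinv_l : Rinv *o R = I2.
Proof. exact: opext HRm.1.2. Qed.
Lemma Rinv_r : R *o Rinv = I2.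
Proof. exact: opext HRm.1.1. Qed.

Lemma RinvK : Rinv *o K = opscale mu^-1 K.
Proof.
have E : K = opscale mu^-1 (R *o K) by rewrite RK opscaleA mulVf // opscale1.
by rewrite {1}E opmulZrC -opmulA Rinv_l opmul1l.
Qed.

Lemma KRinv : K *o Rinv = opscale mu^-1 K.
Proof.
have E : K = opscale mu^-1 (K *o R) by rewrite KR opscaleA mulVf // opscale1.
by rewrite {1}E opmulZl opmulA Rinv_r opmul1r.
Qed.

Lemma KK : K *o K = opscale (Defs.eta q mu) K.
Proof.
rewrite {2}Kexp /lin !opmulDr !opmulZrC opmul1r -opmulA KR opmulZl KR !opscaleA.
apply: opext => i j; rewrite /opadd /opscale /Defs.eta.
by field; rewrite Hmu Hq0 Hqq2.
Qed.

Lemma tailR (X Y W : op N C 3) : X *o Y = W -> forall Z, X *o (Y *o Z) = W *o Z.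
Proof. by move=> H Z; rewrite -opmulA H. Qed.

Local Notation e1K := (e1 K). Local Notation e2K := (e2 K).
Local Notation e1R := (e1 R). Local Notation e2R := (e2 R).
Local Notation e1Ri := (e1 Rinv). Local Notation e2Ri := (e2 Rinv).

Lemma e1KR : e1K *o e1R = opscale mu e1K.
Proof. by rewrite -emb2_mul KR emb2_scale. Qed.
Lemma e2RK : e2R *o e2K = opscale mu e2K.
Proof. by rewrite -emb2_mul RK emb2_scale. Qed.
Lemma e1RiK : e1Ri *o e1K = opscale mu^-1 e1K.
Proof. by rewrite -emb2_mul RinvK emb2_scale. Qed.
Lemma e1KRi : e1K *o e1Ri = opscale mu^-1 e1K.
Proof. by rewrite -emb2_mul KRinv emb2_scale. Qed.

Lemma H4 : e1K *o (e2K *o e1K) = e1K.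
Proof. by rewrite -opmulA (opext HBMW.2.2.2). Qed.
Lemma H2 : e2K *o e1K = e1R *o (e2R *o e1K).
Proof. by rewrite (opext HBMW.2.1) opmulA. Qed.
Lemma H3 : e2K *o e1K = e1Ri *o (e2Ri *o e1K).
Proof. by rewrite (opext HBMW.2.2.1) opmulA. Qed.

Lemma mu_cancel (X Y : op N C 3) : X = opscale mu Y -> Y = opscale mu^-1 X.
Proof. by move=> ->; rewrite opscaleA mulVf // opscale1. Qed.
Lemma mu_cancel' (X Y : op N C 3) : X = opscale mu^-1 Y -> Y = opscale mu X.
Proof. by move=> ->; rewrite opscaleA mulfV // opscale1. Qed.

Lemma T1 : e1K *o (e2R *o e1K) = opscale mu^-1 e1K.
Proof.
apply: mu_cancel; rewrite -{1}H4 H2 (tailR e1KR) opmulZl.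
by [].
Qed.

Lemma T2 : e1K *o (e2Ri *o e1K) = opscale mu e1K.
Proof.
apply: mu_cancel'; rewrite -{1}H4 H3 (tailR e1KRi) opmulZl.
by [].
Qed.

Lemma braidR : (e1R *o e2R) *o e1R = (e2R *o e1R) *o e2R.
Proof. exact: opext HRm.2. Qed.

Lemma conjK : e2K *o (e1R *o e2R) = (e1R *o e2R) *o e1K.
Proof.
rewrite Kexp !emb2_lin; apply: lin_transfer.
by rewrite -opmulA braidR opmulA.
Qed.

Lemma G_inv : (e1R *o e2R) *o (e2Ri *o e1Ri) = @opid N C 3.
Proof.
rewrite !opmulA -[e2R *o (e2Ri *o e1Ri)]opmulA -emb2_mul Rinv_r emb2_id opmul1l.
by rewrite -emb2_mul Rinv_r emb2_id.
Qed.

Lemma e2K_conj : e2K = (e1R *o e2R) *o e1K *o (e2Ri *o e1Ri).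
Proof. by rewrite -conjK opmulA G_inv opmul1r. Qed.

Lemma tail3 (X Y Z W : op N C 3) : X *o (Y *o Z) = W -> forall V, X *o (Y *o (Z *o V)) = W *o V.
Proof. by move=> H V; rewrite -(opmulA Y) -opmulA H. Qed.

Lemma KGiK : e1K *o ((e2Ri *o e1Ri) *o e1K) = e1K.
Proof. by rewrite opmulA e1RiK !opmulZrC T2 opscaleA mulVf // opscale1. Qed.

Lemma KGK : e1K *o ((e1R *o e2R) *o e1K) = e1K.
Proof. by rewrite opmulA (tailR e1KR) opmulZl T1 opscaleA mulfV // opscale1. Qed.

Lemma KGiK' V : e1K *o (e2Ri *o (e1Ri *o (e1K *o V))) = e1K *o V.
Proof.
rewrite -[e1Ri *o (e1K *o V)]opmulA e1RiK opmulZl !opmulZrC (tail3 T2) opmulZl.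
by rewrite opscaleA mulVf // opscale1.
Qed.

Lemma KGK' V : e1K *o (e1R *o (e2R *o (e1K *o V))) = e1K *o V.
Proof.
by rewrite (tailR e1KR) opmulZl (tail3 T1) opmulZl opscaleA mulfV // opscale1.
Qed.

Lemma T3 : e2K *o (e1K *o e2K) = e2K.
Proof.
rewrite e2K_conj !opmulA KGiK' KGK' //.
Qed.

Lemma K2K1 : e2K *o e1K = e2K *o (e1R *o e2R).
Proof. by rewrite H2 -opmulA -conjK. Qed.

Lemma T4 : e2K *o (e1R *o e2K) = opscale mu^-1 e2K.
Proof.
apply: mu_cancel; rewrite -{1}T3 -opmulA K2K1 !opmulA e2RK !opmulZrC //.
Qed.
End Scalar.

Section Idx.
Variables (N : nat) (T : pzRingType).

Definition tri (x y z : 'I_N) : idx N 3 :=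
  [ffun t : 'I_3 => if val t == 0%N then x else if val t == 1%N then y else z].

Lemma pair2_eta (i : idx N 2) : i = pair2 (i ord0) (i ord_max).
Proof. by apply/ffunP => t; rewrite ffunE; case: t => [[|[|t]] Ht] //=; congr (i _); apply: val_inj. Qed.

Lemma tri_eta (i : idx N 3) : i = tri (i ord0) (i (inord 1)) (i ord_max).
Proof.
apply/ffunP => t; rewrite ffunE; case: t => [[|[|[|t]]] Ht] //=; congr (i _); apply: val_inj => //=.
by rewrite inordK.
Qed.

Lemma sum_idx2 (F : idx N 2 -> T) : \sum_(i : idx N 2) F i = \sum_x \sum_y F (pair2 x y).
Proof.
rewrite pair_big /=.
rewrite (reindex (fun xy : 'I_N * 'I_N => pair2 xy.1 xy.2)) //=.
exists (fun i : idx N 2 => (i ord0, i ord_max)) => [[x y] _|i _] /=.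
  by rewrite !ffunE.
by rewrite -pair2_eta.
Qed.

Lemma sum_idx3 (F : idx N 3 -> T) :
  \sum_(i : idx N 3) F i = \sum_x \sum_y \sum_z F (tri x y z).
Proof.
rewrite (eq_bigr (fun x => \sum_(yz : 'I_N * 'I_N) F (tri x yz.1 yz.2))); last first.
  by move=> x _; rewrite pair_big.
rewrite pair_big /=.
rewrite (reindex (fun xyz : 'I_N * ('I_N * 'I_N) => tri xyz.1 xyz.2.1 xyz.2.2)) //=.
exists (fun i : idx N 3 => (i ord0, (i (inord 1), i ord_max))) => [[x [y z]] _|i _] /=.
  by rewrite !ffunE /= inordK.
by rewrite -tri_eta.
Qed.

Lemma e1E (X : op N T 2) a b c d e f :
  emb2 (ord0 : 'I_2) X (tri a b c) (tri d e f) = X (pair2 a b) (pair2 d e) * (c == f)%:R.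
Proof.
rewrite /emb2 !ffunE /=; congr (_ * _).
do 2 apply: congr1; apply/forallP/idP => [H|/eqP Hcf l].
  by have := H ord_max; rewrite !ffunE.
by rewrite !ffunE; case: l => [[|[|[|l]]] Hl] //=; rewrite Hcf.
Qed.

Lemma e2E (X : op N T 2) a b c d e f :
  emb2 (ord_max : 'I_2) X (tri a b c) (tri d e f) = X (pair2 b c) (pair2 e f) * (a == d)%:R.
Proof.
rewrite /emb2 !ffunE /=; congr (_ * _).
do 2 apply: congr1; apply/forallP/idP => [H|/eqP Had l].
  by have := H ord0; rewrite !ffunE.
by rewrite !ffunE; case: l => [[|[|[|l]]] Hl] //=; rewrite Had.
Qed.

Lemma ins_midE (a b c : 'I_N) : ins_mid (pair2 a b) c = tri a c b.
Proof. by apply/ffunP => t; rewrite !ffunE; case: t => [[|[|[|t]]] Ht]. Qed.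
End Idx.

Section Prod3.
Variables (N : nat) (C : fieldType).
Local Notation e1 := (emb2 (ord0 : 'I_2)).
Local Notation e2 := (emb2 (ord_max : 'I_2)).

Lemma sum_deltaC (I : finType) (F : I -> C) (m0 : I) :
  \sum_(m : I) F m * (m0 == m)%:R = F m0.
Proof. by rewrite -(sum_delta F m0); apply: eq_bigr => m _; rewrite eq_sym. Qed.

Lemma ProdA (X Y Z : op N C 2) a1 a2 c d1 d2 f :
  opmul (e1 X) (opmul (e2 Y) (e1 Z)) (tri a1 a2 c) (tri d1 d2 f) =
  \sum_x \sum_y \sum_z X (pair2 a1 a2) (pair2 x y) * Y (pair2 y c) (pair2 z f)
                        * Z (pair2 x z) (pair2 d1 d2).
Proof.
rewrite /opmul sum_idx3; apply: eq_bigr => x _; apply: eq_bigr => y _.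
rewrite (eq_bigr (fun z' => (X (pair2 a1 a2) (pair2 x y) *
   \sum_L e2 Y (tri x y z') L * e1 Z L (tri d1 d2 f)) * (c == z')%:R)); last first.
  by move=> z' _; rewrite e1E; ring.
rewrite sum_deltaC sum_idx3 mulr_sumr.
rewrite (eq_bigr (fun x' => (X (pair2 a1 a2) (pair2 x y) * \sum_w \sum_z
   Y (pair2 y c) (pair2 w z) * Z (pair2 x' w) (pair2 d1 d2) * (z == f)%:R) * (x == x')%:R)); last first.
  move=> x' _; rewrite !mulr_sumr !mulr_suml; apply: eq_bigr => w _.
  rewrite !mulr_sumr !mulr_suml; apply: eq_bigr => z _; rewrite e2E e1E; ring.
rewrite sum_deltaC mulr_sumr; apply: eq_bigr => w _.
rewrite mulr_sumr (eq_bigr (fun z => X (pair2 a1 a2) (pair2 x y) * Y (pair2 y c) (pair2 w z)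
   * Z (pair2 x w) (pair2 d1 d2) * (z == f)%:R)); last by move=> z _; ring.
by rewrite sum_delta.
Qed.

Lemma ProdB (X Y Z : op N C 2) c a1 a2 f d1 d2 :
  opmul (e2 X) (opmul (e1 Y) (e2 Z)) (tri c a1 a2) (tri f d1 d2) =
  \sum_x \sum_y \sum_z X (pair2 a1 a2) (pair2 y x) * Y (pair2 c y) (pair2 f z)
                        * Z (pair2 z x) (pair2 d1 d2).
Proof.
rewrite /opmul sum_idx3.
rewrite (eq_bigr (fun l0 => (\sum_l1 \sum_l2 X (pair2 a1 a2) (pair2 l1 l2) *
   \sum_L e1 Y (tri l0 l1 l2) L * e2 Z L (tri f d1 d2)) * (c == l0)%:R)); last first.
  move=> l0 _; rewrite mulr_suml; apply: eq_bigr => l1 _; rewrite mulr_suml.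
  by apply: eq_bigr => l2 _; rewrite e2E; ring.
rewrite sum_deltaC exchange_big /=; apply: eq_bigr => x _; apply: eq_bigr => y _.
rewrite sum_idx3 mulr_sumr.
rewrite (eq_bigr (fun m0 => (\sum_m1 \sum_m2 X (pair2 a1 a2) (pair2 y x) * Y (pair2 c y) (pair2 m0 m1)
   * Z (pair2 m1 m2) (pair2 d1 d2) * (x == m2)%:R) * (m0 == f)%:R)); last first.
  move=> m0 _; rewrite !mulr_sumr !mulr_suml; apply: eq_bigr => m1 _.
  rewrite !mulr_sumr !mulr_suml; apply: eq_bigr => m2 _; rewrite e1E e2E; ring.
rewrite sum_delta; apply: eq_bigr => z _.
rewrite (eq_bigr (fun m2 => X (pair2 a1 a2) (pair2 y x) * Y (pair2 c y) (pair2 f z)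
   * Z (pair2 z m2) (pair2 d1 d2) * (x == m2)%:R)) //.
by rewrite sum_deltaC.
Qed.

Lemma ProdS (X Y : op N C 2) i1 c i3 j1 j3 :
  opmul (e1 X) (e2 Y) (tri i1 c i3) (tri j1 c j3) =
  \sum_y X (pair2 i1 c) (pair2 j1 y) * Y (pair2 y i3) (pair2 c j3).
Proof.
rewrite /opmul sum_idx3.
rewrite (eq_bigr (fun x => (\sum_y \sum_z X (pair2 i1 c) (pair2 x y) * Y (pair2 y z) (pair2 c j3)
    * (i3 == z)%:R) * (x == j1)%:R)); last first.
  move=> x _; rewrite mulr_suml; apply: eq_bigr => y _; rewrite mulr_suml; apply: eq_bigr => z _.
  rewrite e1E e2E; ring.
rewrite sum_delta; apply: eq_bigr => y _.
rewrite (eq_bigr (fun z => X (pair2 i1 c) (pair2 j1 y) * Y (pair2 y z) (pair2 c j3) * (i3 == z)%:R)) //.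
by rewrite sum_deltaC.
Qed.
End Prod3.

Section Exch.
Variables (C : pzRingType) (I : finType).
Lemma exch12 (F : I -> I -> I -> C) :
  \sum_z \sum_c \sum_f F z c f = \sum_c \sum_f \sum_z F z c f.
Proof.
rewrite exchange_big /=; apply: eq_bigr => c _; by rewrite exchange_big.
Qed.
Lemma exch32 (F : I -> I -> I -> I -> I -> C) :
  \sum_x \sum_y \sum_z \sum_c \sum_f F x y z c f = \sum_c \sum_f \sum_x \sum_y \sum_z F x y z c f.
Proof.
under eq_bigr => x _ do under eq_bigr => y _ do rewrite exch12.
under eq_bigr => x _ do rewrite exch12.
by rewrite exch12.
Qed.
End Exch.

Section Index.
Variables (N : nat) (C : fieldType) (q mu : C) (R Rinv PsiR : op N C 2).
Hypothesis Hq0 : q != 0.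
Hypothesis Hqq : q - q^-1 != 0.
Hypothesis Hmu : mu != 0.
Hypothesis HRm : R_matrix R Rinv.
Hypothesis Hskew : skew_inv R PsiR.
Hypothesis HBMW : BMW_type q mu R Rinv.
Local Notation K := (Kop q mu R).
Local Notation e1 := (emb2 (ord0 : 'I_2)).
Local Notation e2 := (emb2 (ord_max : 'I_2)).

Lemma skew1E i1 i3 j1 j3 :
  \sum_c \sum_y R (pair2 i1 c) (pair2 j1 y) * PsiR (pair2 y i3) (pair2 c j3) =
  ((i1 == j3) && (i3 == j1))%:R.
Proof.
have := Hskew.1 (pair2 i1 i3) (pair2 j1 j3); rewrite /ptr_mid /flip !ffunE /= => <-.
by apply: eq_bigr => c _; rewrite !ins_midE ProdS.
Qed.

Lemma skew2E i1 i3 j1 j3 :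
  \sum_c \sum_y PsiR (pair2 i1 c) (pair2 j1 y) * R (pair2 y i3) (pair2 c j3) =
  ((i1 == j3) && (i3 == j1))%:R.
Proof.
have := Hskew.2 (pair2 i1 i3) (pair2 j1 j3); rewrite /ptr_mid /flip !ffunE /= => <-.
by apply: eq_bigr => c _; rewrite !ins_midE ProdS.
Qed.

Lemma E1 a1 a2 d1 d2 i j :
  \sum_x K (pair2 a1 a2) (pair2 x j) * K (pair2 x i) (pair2 d1 d2) =
  mu^-1 * trC PsiR i j * K (pair2 a1 a2) (pair2 d1 d2).
Proof.
set a := pair2 a1 a2; set d := pair2 d1 d2.
have HT : forall c f, \sum_x \sum_y \sum_z K a (pair2 x y) * R (pair2 y c) (pair2 z f)
    * K (pair2 x z) d = mu^-1 * (K a d * (c == f)%:R).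
  move=> c f; have := congr1 (fun Z => Z (tri a1 a2 c) (tri d1 d2 f)) (T1 Hmu HBMW).
  by rewrite ProdA /opscale e1E.
transitivity (\sum_x \sum_y \sum_z K a (pair2 x y) * K (pair2 x z) d * ((y == j) && (i == z))%:R).
  apply: eq_bigr => x _; symmetry.
  rewrite (eq_bigr (fun y => (\sum_z K a (pair2 x y) * K (pair2 x z) d * (i == z)%:R) * (y == j)%:R)); last first.
    move=> y _; rewrite mulr_suml; apply: eq_bigr => z _; rewrite -mulnb natrM; ring.
  rewrite sum_delta (eq_bigr (fun z => K a (pair2 x j) * K (pair2 x z) d * (i == z)%:R)) //.
  by rewrite sum_deltaC.
transitivity (\sum_x \sum_y \sum_z K a (pair2 x y) * K (pair2 x z) d *
   \sum_c \sum_f R (pair2 y c) (pair2 z f) * PsiR (pair2 f i) (pair2 c j)).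
  by apply: eq_bigr => x _; apply: eq_bigr => y _; apply: eq_bigr => z _; rewrite skew1E.
transitivity (\sum_c \sum_f \sum_x \sum_y \sum_z K a (pair2 x y) * R (pair2 y c) (pair2 z f)
   * K (pair2 x z) d * PsiR (pair2 f i) (pair2 c j)).
  rewrite -exch32; apply: eq_bigr => x _; apply: eq_bigr => y _; apply: eq_bigr => z _.
  rewrite mulr_sumr; apply: eq_bigr => c _; rewrite mulr_sumr; apply: eq_bigr => f _; ring.
transitivity (\sum_c \sum_f mu^-1 * (K a d * (c == f)%:R) * PsiR (pair2 f i) (pair2 c j)).
  apply: eq_bigr => c _; apply: eq_bigr => f _; rewrite -HT mulr_suml; apply: eq_bigr => x _.
  by rewrite mulr_suml; apply: eq_bigr => y _; rewrite mulr_suml.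
rewrite (eq_bigr (fun c => mu^-1 * K a d * PsiR (pair2 c i) (pair2 c j))); last first.
  move=> c _; rewrite (eq_bigr (fun f => mu^-1 * K a d * PsiR (pair2 f i) (pair2 c j) * (f == c)%:R)).
    by rewrite sum_delta.
  move=> f _; rewrite eq_sym; ring.
by rewrite -mulr_sumr /trC mxE; ring.
Qed.
Lemma E1D a1 a2 d1 d2 i j :
  \sum_x K (pair2 a1 a2) (pair2 j x) * K (pair2 i x) (pair2 d1 d2) =
  mu^-1 * trD PsiR i j * K (pair2 a1 a2) (pair2 d1 d2).
Proof.
set a := pair2 a1 a2; set d := pair2 d1 d2.
have HT : forall c f, \sum_x \sum_y \sum_z K a (pair2 y x) * R (pair2 c y) (pair2 f z)
    * K (pair2 z x) d = mu^-1 * (K a d * (c == f)%:R).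
  move=> c f; have := congr1 (fun Z => Z (tri c a1 a2) (tri f d1 d2)) (T4 Hq0 Hqq Hmu HRm HBMW).
  by rewrite ProdB /opscale e2E.
transitivity (\sum_x \sum_y \sum_z K a (pair2 y x) * K (pair2 z x) d * ((i == z) && (y == j))%:R).
  apply: eq_bigr => x _; symmetry.
  rewrite (eq_bigr (fun y => (\sum_z K a (pair2 y x) * K (pair2 z x) d * (i == z)%:R) * (y == j)%:R)); last first.
    move=> y _; rewrite mulr_suml; apply: eq_bigr => z _; rewrite -mulnb natrM; ring.
  rewrite sum_delta (eq_bigr (fun z => K a (pair2 j x) * K (pair2 z x) d * (i == z)%:R)) //.
  by rewrite sum_deltaC.
transitivity (\sum_x \sum_y \sum_z K a (pair2 y x) * K (pair2 z x) d *
   \sum_f \sum_c PsiR (pair2 i f) (pair2 j c) * R (pair2 c y) (pair2 f z)).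
  by apply: eq_bigr => x _; apply: eq_bigr => y _; apply: eq_bigr => z _; rewrite skew2E.
transitivity (\sum_f \sum_c \sum_x \sum_y \sum_z K a (pair2 y x) * R (pair2 c y) (pair2 f z)
   * K (pair2 z x) d * PsiR (pair2 i f) (pair2 j c)).
  rewrite -exch32; apply: eq_bigr => x _; apply: eq_bigr => y _; apply: eq_bigr => z _.
  rewrite mulr_sumr; apply: eq_bigr => c _; rewrite mulr_sumr; apply: eq_bigr => f _; ring.
transitivity (\sum_f \sum_c mu^-1 * (K a d * (c == f)%:R) * PsiR (pair2 i f) (pair2 j c)).
  apply: eq_bigr => f _; apply: eq_bigr => c _; rewrite -HT mulr_suml; apply: eq_bigr => x _.
  by rewrite mulr_suml; apply: eq_bigr => y _; rewrite mulr_suml.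
rewrite (eq_bigr (fun f => mu^-1 * K a d * PsiR (pair2 i f) (pair2 j f))); last first.
  move=> f _; rewrite (eq_bigr (fun c => mu^-1 * K a d * PsiR (pair2 i f) (pair2 j c) * (c == f)%:R)).
    by rewrite sum_delta.
  move=> c _; ring.
by rewrite -mulr_sumr /trD mxE; ring.
Qed.

Lemma TrK a1 a2 d1 d2 c f :
  (\sum_y \sum_z trD PsiR z y * K (pair2 c y) (pair2 f z)) * (mu^-1 * K (pair2 a1 a2) (pair2 d1 d2))
  = K (pair2 a1 a2) (pair2 d1 d2) * (c == f)%:R.
Proof.
have := congr1 (fun Z => Z (tri c a1 a2) (tri f d1 d2)) (T3 Hq0 Hqq Hmu HRm HBMW).
rewrite ProdB e2E => <-.
rewrite mulr_suml [RHS]exchange_big /=; apply: eq_bigr => y _.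
rewrite mulr_suml [RHS]exchange_big /=; apply: eq_bigr => z _.
transitivity (K (pair2 c y) (pair2 f z) * (\sum_x K (pair2 a1 a2) (pair2 y x) * K (pair2 z x) (pair2 d1 d2))).
  by rewrite E1D; ring.
rewrite mulr_sumr; apply: eq_bigr => x _; ring.
Qed.
End Index.

Lemma rank_one N (C : fieldType) (K : op N C 2) (f : 'I_N -> 'I_N -> idx N 2)
   (g1 g2 : idx N 2 -> 'I_N) (E : 'M[C]_N) (c : C) :
  (forall l, l = f (g1 l) (g2 l)) -> E \in unitmx -> c != 0 ->
  (forall a d j i, \sum_x K a (f x j) * K (f x i) d = c * K a d * E j i) ->
  forall a0 d0, K a0 d0 != 0 -> exists gam : idx N 2 -> C, forall m d, K m d = gam m * K a0 d.
Proof.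
move=> Hf HE Hc H a0 d0 Hn.
pose P := \matrix_(x, j) K a0 (f x j).
pose Q d := \matrix_(x, i) K (f x i) d.
have HPQ : forall d, P^T *m Q d = (c * K a0 d) *: E.
  move=> d; apply/matrixP => j i; rewrite !mxE -H; apply: eq_bigr => x _; by rewrite !mxE.
have HPu : P^T \in unitmx.
  have : P^T *m Q d0 \in unitmx by rewrite HPQ unitmxZ // unitfE mulf_neq0.
  by rewrite unitmx_mul => /andP [].
pose G := invmx (P^T) *m (c *: E).
exists (fun m => G (g1 m) (g2 m)) => m d.
have HQ : Q d = K a0 d *: G.
  by rewrite -(mulKmx HPu (Q d)) HPQ /G -!scalemxAr scalerA (mulrC c).
have := congr1 (fun Z : 'M_N => Z (g1 m) (g2 m)) HQ; rewrite !mxE -Hf => ->.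
by rewrite mulrC.
Qed.

Section Core.
Variables (N : nat) (C : fieldType) (q mu : C) (R Rinv PsiR : op N C 2).
Hypothesis Hq0 : q != 0.
Hypothesis Hqq : q - q^-1 != 0.
Hypothesis Hmu : mu != 0.
Hypothesis HRm : R_matrix R Rinv.
Hypothesis Hskew : skew_inv R PsiR.
Hypothesis HBMW : BMW_type q mu R Rinv.
Hypothesis Hinv : trC PsiR \in unitmx \/ trD PsiR \in unitmx.
Local Notation K := (Kop q mu R).

Lemma K_rank1 : (forall a d, K a d = 0) \/
  exists a0 d0 (gam : idx N 2 -> C), K a0 d0 != 0 /\ forall m d, K m d = gam m * K a0 d.
Proof.
case: (boolP [exists a, exists d, K a d != 0]) => [/existsP [a0 /existsP [d0 Hn]]|Hall].
- right; exists a0, d0.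
  have Hm1 : mu^-1 != 0 by rewrite invr_eq0.
  case: Hinv => Hu.
  + have HE : forall a d j i, \sum_x K a (pair2 x j) * K (pair2 x i) d = mu^-1 * K a d * (trC PsiR)^T j i.
      move=> a d j i; rewrite (pair2_eta a) (pair2_eta d) (E1 Hmu Hskew HBMW) !mxE; ring.
    have [gam Hg] := @rank_one N C K (fun x j => pair2 x j) (fun l => l ord0) (fun l => l ord_max)
      (trC PsiR)^T mu^-1 (@pair2_eta N) (ltac:(by rewrite unitmx_tr)) Hm1 HE a0 d0 Hn.
    by exists gam.
  + have HE : forall a d j i, \sum_x K a (pair2 j x) * K (pair2 i x) d = mu^-1 * K a d * (trD PsiR)^T j i.
      move=> a d j i; rewrite (pair2_eta a) (pair2_eta d) (E1D Hq0 Hqq Hmu HRm Hskew HBMW) !mxE; ring.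
    have [gam Hg] := @rank_one N C K (fun x j => pair2 j x) (fun l => l ord_max) (fun l => l ord0)
      (trD PsiR)^T mu^-1 (@pair2_eta N) (ltac:(by rewrite unitmx_tr)) Hm1 HE a0 d0 Hn.
    by exists gam.
- left => a d; move: Hall; rewrite negb_exists => /forallP /(_ a).
  by rewrite negb_exists => /forallP /(_ d); rewrite negbK => /eqP.
Qed.
Lemma R1 i l m j : K i l * K m j = K m l * K i j.
Proof.
case: K_rank1 => [H0|[a0 [d0 [gam [_ Hg]]]]]; first by rewrite !H0 !mul0r.
by rewrite (Hg i l) (Hg m j) (Hg m l) (Hg i j); ring.
Qed.

Lemma R2 a1 a2 d :
  \sum_x \sum_y trD PsiR a1 x * trD PsiR a2 y * K (pair2 x y) d = mu ^+ 2 * K (pair2 a1 a2) d.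
Proof.
case: K_rank1 => [H0|[a0 [d0 [gam [Hn Hg]]]]].
  by rewrite H0 mulr0 big1 // => x _; rewrite big1 // => y _; rewrite H0 mulr0.
have E1' : forall i j, \sum_x K a0 (pair2 j x) * K (pair2 i x) d0 = mu^-1 * trD PsiR i j * K a0 d0.
  move=> i j; have E := E1D Hq0 Hqq Hmu HRm Hskew HBMW (a0 ord0) (a0 ord_max) (d0 ord0) (d0 ord_max) i j.
  by rewrite -!pair2_eta in E.
have T' : forall c f, (\sum_y \sum_z trD PsiR z y * K (pair2 c y) (pair2 f z)) * (mu^-1 * K a0 d0)
    = K a0 d0 * (c == f)%:R.
  move=> c f; have E := TrK Hq0 Hqq Hmu HRm Hskew HBMW (a0 ord0) (a0 ord_max) (d0 ord0) (d0 ord_max) c f.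
  by rewrite -!pair2_eta in E.
move: E1' T'; move: (trD PsiR) => D E1' T'.
pose U := \matrix_(x, y) gam (pair2 x y).
pose W := \matrix_(x, y) K a0 (pair2 x y).
have Ha : U *m W^T = mu^-1 *: D.
  apply/matrixP => i j; apply: (mulIf Hn); rewrite !mxE -E1' mulr_suml; apply: eq_bigr => x _.
  by rewrite !mxE (Hg (pair2 i x) d0); ring.
have Hb : U *m D^T *m W^T = mu *: 1%:M.
  apply/matrixP => c f.
  have Hm1 : mu^-1 * K a0 d0 != 0 by rewrite mulf_neq0 // invr_eq0.
  apply: (mulIf Hm1); rewrite !mxE.
  transitivity ((\sum_z \sum_y D z y * K (pair2 c y) (pair2 f z)) * (mu^-1 * K a0 d0)).
    congr (_ * _); apply: eq_bigr => z _; rewrite !mxE mulr_suml; apply: eq_bigr => y _.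
    by rewrite !mxE (Hg (pair2 c y) (pair2 f z)); ring.
  rewrite exchange_big /= T'.
  by field; rewrite Hmu.
have Hc : (mu^-1 *: (U *m D^T)) *m W^T = 1%:M.
  by rewrite -scalemxAl Hb scalerA mulVf // scale1r.
have Hd := mulmx1C Hc.
have HDU : D *m U *m D^T = mu ^+ 2 *: U.
  have HD : D = mu *: (U *m W^T) by rewrite Ha scalerA mulfV // scale1r.
  rewrite {1}HD -!scalemxAl -!mulmxA.
  have -> : W^T *m (U *m D^T) = mu *: 1%:M.
    by rewrite -Hd scalemxAr scalerA mulfV // scale1r.
  by rewrite -scalemxAr mulmx1 scalerA expr2.
have := congr1 (fun Z : 'M_N => Z a1 a2) HDU; rewrite !mxE => HE.
rewrite (Hg (pair2 a1 a2) d) mulrA -HE mulr_suml [LHS]exchange_big /=; apply: eq_bigr => y _.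
rewrite !mxE !mulr_suml; apply: eq_bigr => x _.
by rewrite !mxE (Hg (pair2 x y) d); ring.
Qed.
End Core.

Arguments embw {N T} k {w} p X _ _.
Local Infix "*o" := opmul (at level 40, left associativity).

Section LinA.
Variables (N : nat) (T : pzRingType) (k : nat).
Definition linA (a b c : T) (X : op N T k) :=
  opadd (opscale a (@opid N T k)) (opadd (opscale b X) (opscale c (X *o X))).

Lemma linA_comm a b c (X G : op N T k) :
  (forall x, a * x = x * a) -> (forall x, b * x = x * b) -> (forall x, c * x = x * c) ->
  X *o G = G *o X -> linA a b c X *o G = G *o linA a b c X.
Proof.
move=> Ha Hb Hc H; rewrite /linA !opmulDl !opmulDr !opmulZl !(opmulZr _ _ Ha) !(opmulZr _ _ Hb).
rewrite !(opmulZr _ _ Hc) opmul1l opmul1r.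
by rewrite opmulA H -[X *o (G *o X)]opmulA H opmulA.
Qed.
End LinA.

Lemma opmap_lin N (C : fieldType) (A : algType C) a b c (X : op N C 2) :
  opmap (@inA C A) (lin a b c X) = linA (inA A a) (inA A b) (inA A c) (opmap (@inA C A) X).
Proof. by rewrite /lin /linA !opmap_add !opmap_scale opmap_mul opmap_id. Qed.

Lemma emb2_01 N (T : pzRingType) (X : op N T 2) : emb2 (ord0 : 'I_1) X = X.
Proof. by rewrite emb2E embw_full. Qed.

Section Emb1Pair.
Variables (N : nat) (T : pzRingType).
Lemma emb1_0E (Y : 'M[T]_N) a b c e :
  emb1 (ord0 : 'I_2) Y (pair2 a b) (pair2 c e) = Y a c * (b == e)%:R.
Proof.
rewrite /emb1 !ffunE /=; congr (_ * _); do 2 apply: congr1.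
apply/forallP/idP => [H|/eqP Hbe l]; first by have := H ord_max; rewrite !ffunE.
by rewrite !ffunE; case: l => [[|[|l]] Hl] //=; rewrite Hbe.
Qed.
Lemma emb1_1E (Y : 'M[T]_N) a b c e :
  emb1 (ord_max : 'I_2) Y (pair2 a b) (pair2 c e) = Y b e * (a == c)%:R.
Proof.
rewrite /emb1 !ffunE /=; congr (_ * _); do 2 apply: congr1.
apply/forallP/idP => [H|/eqP Hac l]; first by have := H ord0; rewrite !ffunE.
by rewrite !ffunE; case: l => [[|[|l]] Hl] //=; rewrite Hac.
Qed.
End Emb1Pair.

Lemma sum_deltaCg (T : pzRingType) (I : finType) (F : I -> T) (m0 : I) :
  \sum_(m : I) F m * (m0 == m)%:R = F m0.
Proof. by rewrite -(sum_delta F m0); apply: eq_bigr => m _; rewrite eq_sym. Qed.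

Lemma emb1_prodE N (T : pzRingType) (Y Y' : 'M[T]_N) a1 a2 x y :
  (emb1 (ord0 : 'I_2) Y *o emb1 (ord_max : 'I_2) Y') (pair2 a1 a2) (pair2 x y) = Y a1 x * Y' a2 y.
Proof.
rewrite /opmul sum_idx2.
rewrite (eq_bigr (fun c => (Y a1 c * Y' a2 y) * (c == x)%:R)); last first.
  move=> c _; rewrite (eq_bigr (fun e => (Y a1 c * Y' e y * (c == x)%:R) * (a2 == e)%:R)); last first.
    move=> e _; rewrite emb1_0E emb1_1E.
    by rewrite -!mulrA; congr (_ * _); rewrite natr_commr -!mulrA; congr (_ * _); rewrite natr_commr.
  by rewrite sum_deltaCg.
by rewrite sum_delta.
Qed.

Section CoreA.
Variables (N : nat) (C : fieldType) (A : algType C) (q mu : C) (R Rinv PsiR : op N C 2).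
Hypothesis Hq0 : q != 0.
Hypothesis Hqq : q - q^-1 != 0.
Hypothesis Hmu : mu != 0.
Hypothesis Heta : Defs.eta q mu != 0.
Hypothesis HRm : R_matrix R Rinv.
Hypothesis Hskew : skew_inv R PsiR.
Hypothesis HBMW : BMW_type q mu R Rinv.
Hypothesis Hinv : trC PsiR \in unitmx \/ trD PsiR \in unitmx.
Local Notation K := (Kop q mu R).
Local Notation iA := (inA A).
Local Notation KA := (opmap iA K).
Local Notation RA := (opmap iA R).

Lemma CoreA1 (X : op N A 2) : RA *o X = X *o RA -> KA *o X = X *o KA.
Proof.
move=> H; rewrite (Kexp R Hq0 Hqq Hmu) opmap_lin; apply: linA_comm => // x; exact: inA_central.
Qed.

Lemma KKA : KA *o KA = opscale (iA (Defs.eta q mu)) KA.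
Proof. by rewrite -opmap_mul (KK Hq0 Hqq Hmu HBMW) opmap_scale. Qed.

Lemma DDKA : (emb1 (ord0 : 'I_2) (map_mx iA (trD PsiR)) *o emb1 (ord_max : 'I_2) (map_mx iA (trD PsiR)))
   *o KA = opscale (iA (mu ^+ 2)) KA.
Proof.
apply: opext => a d; rewrite /opmul /opscale /opmap (pair2_eta a) sum_idx2.
rewrite -inA_mul -(R2 Hq0 Hqq Hmu HRm Hskew HBMW Hinv) inA_sum; apply: eq_bigr => x _.
rewrite inA_sum; apply: eq_bigr => y _.
have HD := emb1_prodE (map_mx iA (trD PsiR)) (map_mx iA (trD PsiR)) (a ord0) (a ord_max) x y.
by rewrite /opmul in HD; rewrite HD !mxE !inA_mul.
Qed.

Lemma CoreA2 (X : op N A 2) : RA *o X = X *o RA ->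
  X *o KA = opmulr (opmap (fun c => iA (mu ^- 2 * c)) K)
                   ((Defs.eta q mu)^-1 *: Rtrace12 (trD PsiR) (X *o KA)).
Proof.
move=> H; have Hc := CoreA1 H.
set S := \sum_(l : idx N 2) \sum_(p : idx N 2) iA (K p l) * X l p.
have E1 : X *o KA = opscale (iA (Defs.eta q mu)^-1) (KA *o X *o KA).
  rewrite [in RHS]Hc [in RHS]opmulA -opmulZr; last by move=> x; exact: inA_central.
  by rewrite KKA opscaleA -inA_mul mulVf // /inA scale1r opscale1.
have E2 : forall i j, (KA *o X *o KA) i j = iA (K i j) * S.
  move=> i j; rewrite /opmul; under eq_bigr do rewrite mulr_suml.
  rewrite exchange_big /= /S mulr_sumr; apply: eq_bigr => l _; rewrite mulr_sumr; apply: eq_bigr => p _.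
  rewrite /opmap /inA !mulr_algl mulr_algr !scalerA; congr (_ *: _).
  by rewrite mulrC (R1 Hq0 Hqq Hmu HRm Hskew HBMW Hinv) mulrC.
have E3 : Rtrace12 (trD PsiR) (X *o KA) = iA (mu ^+ 2) * S.
  rewrite /Rtrace12 -Hc -opmulA DDKA opmulZl /opscale -mulr_sumr; congr (_ * _).
  rewrite /S exchange_big /=; apply: eq_bigr => p _; rewrite /opmul /opmap; by [].
apply: opext => i j; rewrite {1}E1 /opscale E2 /opmulr E3 /opmap /inA !mulr_algl !scalerA.
congr (_ *: _); by field; rewrite Hmu Heta.
Qed.
End CoreA.

Arguments embw {N T} k {w} p X _ _.
Local Infix "*o" := opmul (at level 40, left associativity).

Section MbarLemmas.
Variables (N : nat) (C : fieldType) (A : algType C) (F Finv : op N C 2) (M : 'M[A]_N) (k : nat).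
Local Notation iA := (inA A).
Local Notation FA := (opmap iA F).
Local Notation FiA := (opmap iA Finv).
Local Notation Mb := (Mbar F Finv M k).

Lemma Mbar0 : Mb 0 = embw k 0 (m1 M).
Proof. by rewrite /= emb1E. Qed.

Lemma MbarS j : (j < k)%N -> Mb j.+1 = embw k j FA *o Mb j *o embw k j FiA.
Proof.
move=> Hj; rewrite /=.
have -> : (insub j : option 'I_k) = Some (Ordinal Hj) by exact: insubT.
by rewrite !emb2E.
Qed.
End MbarLemmas.

Section OpMulr.
Variables (N : nat) (T : pzRingType) (k : nat).
Lemma opmul_mulr (X Y : op N T k) g : X *o opmulr Y g = opmulr (X *o Y) g.
Proof. apply: opext => i j; rewrite /opmul /opmulr mulr_suml; apply: eq_bigr => l _; by rewrite mulrA. Qed.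
Lemma opmulr_mul (X Y : op N T k) g : (forall i j, Y i j * g = g * Y i j) ->
  opmulr X g *o Y = opmulr (X *o Y) g.
Proof.
move=> H; apply: opext => i j; rewrite /opmul /opmulr mulr_suml; apply: eq_bigr => l _.
by rewrite -!mulrA H.
Qed.
Lemma embw_opmulr w p (X : op N T w) g : embw k p (opmulr X g) = opmulr (embw k p X) g.
Proof. apply: opext => i j; by rewrite /embw /opmulr -!mulrA natr_commr. Qed.
End OpMulr.

Lemma swap_tail N (T : pzRingType) k (X Y : op N T k) :
  X *o Y = Y *o X -> forall Z, X *o (Y *o Z) = Y *o (X *o Z).
Proof. by move=> H Z; rewrite -!opmulA H. Qed.

Section Comm.
Variables (N : nat) (C : fieldType) (A : algType C) (F Finv : op N C 2) (M : 'M[A]_N) (k : nat).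
Local Notation iA := (inA A).
Local Notation Mb := (Mbar F Finv M k).

Lemma embw_comm_sc p p' (X Y : op N C 2) : (p + 2 <= p')%N -> (p' + 2 <= k.+1)%N ->
  embw k p (opmap iA X) *o embw k p' (opmap iA Y) = embw k p' (opmap iA Y) *o embw k p (opmap iA X).
Proof.
move=> H1 H2; apply: embw_comm; rewrite ?H1 //; try lia.
by move=> *; rewrite /opmap inA_central.
Qed.

Lemma Mbar_comm j : (j <= k)%N -> forall p (X : op N C 2), (j < p)%N -> (p + 2 <= k.+1)%N ->
  Mb j *o embw k p (opmap iA X) = embw k p (opmap iA X) *o Mb j.
Proof.
elim: j => [_|j IH Hj] p X Hp Hk.
- rewrite Mbar0; apply: embw_comm => //; try lia.
  by move=> *; rewrite /opmap /m1 inA_central.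
- have Hj' : (j < k)%N by lia.
  rewrite MbarS // !opmulA.
  have E1 := @embw_comm_sc j p Finv X ltac:(lia) Hk.
  have E2 := @embw_comm_sc j p F X ltac:(lia) Hk.
  have E3 := IH ltac:(lia) p X ltac:(lia) Hk.
  by rewrite E1 (swap_tail E3) (swap_tail E2).
Qed.
End Comm.

Lemma opmap_emb2 N (C : fieldType) (A : algType C) k (p : 'I_k) (X : op N C 2) :
  opmap (@inA C A) (emb2 p X) = emb2 p (opmap (@inA C A) X).
Proof. by rewrite !emb2E opmap_embw. Qed.

Section Transport.
Variables (N : nat) (T : pzRingType) (k n : nat).
Hypothesis Hn : (n + 3 <= k.+1)%N.
Lemma embw_e1 (X : op N T 2) : embw k n (emb2 (ord0 : 'I_2) X) = embw k n X.
Proof. by rewrite emb2E embw_comp //= addn0. Qed.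
Lemma embw_e2 (X : op N T 2) : embw k n (emb2 (ord_max : 'I_2) X) = embw k n.+1 X.
Proof. by rewrite emb2E embw_comp //= addn1. Qed.
End Transport.

Section KLevel.
Variables (N : nat) (C : fieldType) (A : algType C) (q mu : C).
Variables (R Rinv F Finv : op N C 2) (M : 'M[A]_N) (k : nat).
Hypothesis Hq0 : q != 0.
Hypothesis Hqq : q - q^-1 != 0.
Hypothesis Hmu : mu != 0.
Hypothesis HFm : R_matrix F Finv.
Hypothesis Hcomp : compatible R F.
Local Notation iA := (inA A).
Local Notation K := (Kop q mu R).
Local Notation FA := (opmap iA F).
Local Notation FiA := (opmap iA Finv).
Local Notation e1 := (emb2 (ord0 : 'I_2)).
Local Notation e2 := (emb2 (ord_max : 'I_2)).

Lemma F_inv_k n : (n + 2 <= k.+1)%N -> embw k n FA *o embw k n FiA = @opid N A k.+1.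
Proof.
by move=> Hn; rewrite -embw_mul // -opmap_mul (opext HFm.1.1) opmap_id embw_id.
Qed.
Lemma F_inv_k' n : (n + 2 <= k.+1)%N -> embw k n FiA *o embw k n FA = @opid N A k.+1.
Proof.
by move=> Hn; rewrite -embw_mul // -opmap_mul (opext HFm.1.2) opmap_id embw_id.
Qed.

Lemma braid_k n : (n + 3 <= k.+1)%N ->
  embw k n FA *o embw k n.+1 FA *o embw k n FA = embw k n.+1 FA *o embw k n FA *o embw k n.+1 FA.
Proof.
move=> Hn; have := congr1 (fun Z => embw k n (opmap iA Z)) (opext HFm.2) => /=.
by rewrite !opmap_mul !opmap_emb2 !embw_mul // !embw_e1 // !embw_e2.
Qed.

Lemma compat_C c : e2 (opscale c K) *o (e1 F *o e2 F) = (e1 F *o e2 F) *o e1 (opscale c K).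
Proof.
rewrite (Kexp R Hq0 Hqq Hmu) !emb2_scale !emb2_lin opmulZl opmulZrC; congr (opscale c _).
apply: lin_transfer.
by rewrite -opmulA (opext Hcomp.2).
Qed.

Lemma compat_k n c : (n + 3 <= k.+1)%N ->
  embw k n.+1 (opmap iA (opscale c K)) *o (embw k n FA *o embw k n.+1 FA) =
  (embw k n FA *o embw k n.+1 FA) *o embw k n (opmap iA (opscale c K)).
Proof.
move=> Hn; have := congr1 (fun Z => embw k n (opmap iA Z)) (compat_C c) => /=.
by rewrite !opmap_mul !opmap_emb2 !embw_mul // !embw_e1 // !embw_e2.
Qed.
End KLevel.

Section Alg.
Variables (N : nat) (T : pzRingType) (k : nat).
Local Notation I := (@opid N T k).
Implicit Types (X Y Z : op N T k).

Lemma inv_uniq a b X : a *o X = I -> X *o b = I -> a = b.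
Proof. by move=> Ha Hb; rewrite -[a]opmul1r -Hb -opmulA Ha opmul1l. Qed.

Lemma cancel_tail P Q : P *o Q = I -> forall Z, P *o (Q *o Z) = Z.
Proof. by move=> H Z; rewrite -opmulA H opmul1l. Qed.

Lemma central_mul (C : fieldType) (A : algType C) (X Y : op N A k) :
  central X -> central Y -> central (X *o Y).
Proof.
move=> HX HY i j a; rewrite /opmul mulr_suml mulr_sumr; apply: eq_bigr => l _.
by rewrite -mulrA HY mulrA HX mulrA.
Qed.

Lemma step_alg F1 F2 G1 G2 Mn Mn1 Mn2 Kn Kn1 K'n K'n1 g :
  F1 *o G1 = I -> G1 *o F1 = I -> F2 *o G2 = I -> G2 *o F2 = I ->
  F1 *o F2 *o F1 = F2 *o F1 *o F2 ->
  Mn *o F2 = F2 *o Mn -> Mn *o G2 = G2 *o Mn ->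
  Mn1 = F1 *o Mn *o G1 -> Mn2 = F2 *o Mn1 *o G2 ->
  Kn1 *o (F1 *o F2) = (F1 *o F2) *o Kn -> K'n1 *o (F1 *o F2) = (F1 *o F2) *o K'n ->
  (forall i j, (G2 *o G1) i j * g = g * (G2 *o G1) i j) ->
  Kn *o (Mn *o Mn1) = (Mn *o Mn1) *o Kn -> (Mn *o Mn1) *o Kn = opmulr K'n g ->
  Kn1 *o (Mn1 *o Mn2) = (Mn1 *o Mn2) *o Kn1 /\ (Mn1 *o Mn2) *o Kn1 = opmulr K'n1 g.
Proof.
move=> I1 I1' I2 I2' Br C1 C2 S1 S2 Kc K'c Hg IH1 IH2.
have FG : (F1 *o F2) *o (G2 *o G1) = I by rewrite opmulA -(opmulA F2) I2 opmul1l I1.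
have GF : (G2 *o G1) *o (F1 *o F2) = I by rewrite opmulA -(opmulA G1) I1' opmul1l I2'.
have A1 : (F1 *o F2) *o Mn *o (G2 *o G1) = Mn1.
  rewrite S1 !opmulA (swap_tail (esym C1)).
  by rewrite -[F2 *o (G2 *o G1)]opmulA I2 opmul1l.
have BrF : (F1 *o F2) *o F1 = F2 *o (F1 *o F2) by rewrite Br opmulA.
move: FG GF A1 BrF Kc K'c Hg; move: (F1 *o F2) (G2 *o G1) => FF GG FG GF A1 BrF Kc K'c Hg.
have BrG : G1 *o GG = GG *o G2.
  apply: (inv_uniq (X := FF *o F1)).
    by rewrite opmulA -(opmulA GG) GF opmul1l I1'.
  by rewrite BrF opmulA -(opmulA FF) FG opmul1l I2.
have B1 : FF *o Mn1 *o GG = Mn2.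
  rewrite S2 {1}S1 -[in RHS]A1 !opmulA BrG -(opmulA FF F1) BrF.
  by rewrite !opmulA.
have MMe : Mn1 *o Mn2 = FF *o (Mn *o Mn1) *o GG.
  rewrite -B1 -{1}A1 !opmulA.
  by rewrite (cancel_tail GF).
have Kc' : GG *o Kn1 = Kn *o GG.
  rewrite -[GG *o Kn1]opmul1r -FG !opmulA -(opmulA Kn1 FF) Kc !opmulA.
  by rewrite (cancel_tail GF).
have K'e : FF *o K'n *o GG = K'n1.
  by rewrite -K'c opmulA FG opmul1r.
rewrite MMe; move: IH1 IH2; move: (Mn *o Mn1) => MM IH1 IH2.
split.
  transitivity (FF *o (MM *o (Kn *o GG))).
    rewrite !opmulA -(opmulA Kn1 FF) Kc opmulA -(opmulA Kn MM) IH1.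
    by rewrite !opmulA.
  by rewrite !opmulA Kc'.
transitivity (FF *o (MM *o Kn) *o GG).
  by rewrite !opmulA Kc'.
by rewrite IH2 opmul_mulr opmulr_mul // K'e.
Qed.
End Alg.

Section Main.
Variables (N : nat) (C : fieldType) (A : algType C) (q mu : C).
Variables (R Rinv F Finv PsiR : op N C 2) (M : 'M[A]_N) (k : nat).
Hypothesis Hq0 : q != 0.
Hypothesis Hqq : q - q^-1 != 0.
Hypothesis Hmu : mu != 0.
Hypothesis Heta : Defs.eta q mu != 0.
Hypothesis HRm : R_matrix R Rinv.
Hypothesis HFm : R_matrix F Finv.
Hypothesis Hcomp : compatible R F.
Hypothesis Hskew : skew_inv R PsiR.
Hypothesis Hinv : trC PsiR \in unitmx \/ trD PsiR \in unitmx.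
Hypothesis HBMW : BMW_type q mu R Rinv.
Hypothesis HQMA : QMA_relation F Finv M R.
Local Notation iA := (inA A).
Local Notation K := (Kop q mu R).
Local Notation FA := (opmap iA F).
Local Notation FiA := (opmap iA Finv).
Local Notation KA := (opmap iA K).
Local Notation K'A := (opmap iA (opscale (mu ^- 2) K)).
Local Notation Mb := (Mbar F Finv M k).
Local Notation g := (gcontr F Finv M q mu R PsiR).

Lemma base2 :
  KA *o (Mbar F Finv M 1 0 *o Mbar F Finv M 1 1) = (Mbar F Finv M 1 0 *o Mbar F Finv M 1 1) *o KA /\
  (Mbar F Finv M 1 0 *o Mbar F Finv M 1 1) *o KA = opmulr K'A g.
Proof.
have HR : opmap iA R *o (Mbar F Finv M 1 0 *o Mbar F Finv M 1 1) =
          (Mbar F Finv M 1 0 *o Mbar F Finv M 1 1) *o opmap iA R.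
  by have := opext HQMA; rewrite emb2_01.
split; first exact: CoreA1.
rewrite (CoreA2 Hq0 Hqq Hmu Heta HRm Hskew HBMW Hinv HR) /gcontr emb2_01.
by congr (opmulr _ _); apply: opext.
Qed.

Lemma MM0 : (0 < k)%N ->
  Mb 0 *o Mb 1 = embw k 0 (Mbar F Finv M 1 0 *o Mbar F Finv M 1 1).
Proof.
move=> Hk; rewrite [Mb 1]MbarS // [Mbar F Finv M 1 1]MbarS // !Mbar0.
rewrite !embw_mul //; try lia.
by rewrite !(embw_comp (v:=1)).
Qed.

Lemma central_emb n (X : op N C 2) : central (embw k n (opmap iA X)).
Proof. apply: central_embw; exact: central_map. Qed.

Lemma claim n : (n < k)%N ->
  embw k n KA *o (Mb n *o Mb n.+1) = (Mb n *o Mb n.+1) *o embw k n KA /\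
  (Mb n *o Mb n.+1) *o embw k n KA = opmulr (embw k n K'A) g.
Proof.
elim: n => [Hk|n IH Hn].
  rewrite MM0 // -!embw_mul //; try lia.
  have [H1 H2] := base2.
  by rewrite H1 H2 embw_opmulr.
have [IH1 IH2] := IH ltac:(lia).
have Hn3 : (n + 3 <= k.+1)%N by lia.
have I1 := @F_inv_k N C A F Finv k HFm n ltac:(lia).
have I1' := @F_inv_k' N C A F Finv k HFm n ltac:(lia).
have I2 := @F_inv_k N C A F Finv k HFm n.+1 ltac:(lia).
have I2' := @F_inv_k' N C A F Finv k HFm n.+1 ltac:(lia).
have Br := @braid_k N C A F Finv k HFm n Hn3.
have C1 := @Mbar_comm N C A F Finv M k n ltac:(lia) n.+1 F ltac:(lia) ltac:(lia).
have C2 := @Mbar_comm N C A F Finv M k n ltac:(lia) n.+1 Finv ltac:(lia) ltac:(lia).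
have S1 := @MbarS N C A F Finv M k n ltac:(lia).
have S2 := @MbarS N C A F Finv M k n.+1 ltac:(lia).
have Kc := @compat_k N C A q mu R F k Hq0 Hqq Hmu Hcomp n 1 Hn3.
rewrite opscale1 in Kc.
have K'c := @compat_k N C A q mu R F k Hq0 Hqq Hmu Hcomp n (mu ^- 2) Hn3.
have Hg : forall i j, (embw k n.+1 FiA *o embw k n FiA) i j * g = g * (embw k n.+1 FiA *o embw k n FiA) i j.
  by move=> i j; apply: central_mul; apply: central_emb.
exact: (step_alg I1 I1' I2 I2' Br C1 C2 S1 S2 Kc K'c Hg IH1 IH2).
Qed.
End Main.

(* ---- L10 ---- *)
Arguments embw {N T} k {w} p X _ _.

Unset Implicit Arguments.
Theorem lemma4p6 (C : numClosedFieldType) (N : nat) (q mu : C)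
    (R Rinv F Finv PsiR : op N C 2) (A : algType C) (M : 'M[A]_N) :
  q != 0 -> q != 1 -> q != -1 ->
  mu != 0 -> mu != q -> mu != - q^-1 ->
  R_matrix R Rinv -> R_matrix F Finv -> compatible R F ->
  skew_inv R PsiR -> (trC PsiR \in unitmx \/ trD PsiR \in unitmx) ->
  strictly_skew_invertible F ->
  BMW_type q mu R Rinv ->
  QMA_relation F Finv M R ->
  forall (k : nat) (n : 'I_k),
    (* n is 0-based: K_{n+1} M_{\bar (n+1)} M_{\bar (n+2)} on V^{(x)(k+1)} *)
    let Kn := emb2 n (opmap (@inA C A) (Kop q mu R)) in
    let MM := opmul (Mbar F Finv M k n) (Mbar F Finv M k n.+1) in
    opeq (opmul Kn MM) (opmul MM Kn) /\
    opeq (opmul MM Kn)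
         (opmulr (emb2 n (opmap (fun c => @inA C A (mu ^- 2 * c)) (Kop q mu R)))
                 (gcontr F Finv M q mu R PsiR)).
Proof.
move=> Hq0 Hq1 Hqm1 Hmu Hmuq Hmuq' HRm HFm Hcomp Hskew Hinv _ HBMW HQMA k n Kn MM.
have Hqq : q - q^-1 != 0.
  have -> : q - q^-1 = (q - 1) * (q + 1) / q by field.
  rewrite !mulf_neq0 ?invr_eq0 // ?subr_eq0 //.
  by rewrite addr_eq0.
have Heta : Defs.eta q mu != 0.
  rewrite /Defs.eta !mulf_neq0 ?invr_eq0 ?mulf_neq0 // ?subr_eq0 1?eq_sym //.
  by rewrite eq_sym addrC addr_eq0.
have [H1 H2] := claim (A := A) (M := M) Hq0 Hqq Hmu Heta HRm HFm Hcomp Hskew Hinv HBMW HQMA (ltn_ord n).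
have E : opmap (fun c => @inA C A (mu ^- 2 * c)) (Kop q mu R) = opmap (@inA C A) (opscale (mu ^- 2) (Kop q mu R)).
  by apply: opext.
rewrite /Kn /MM !emb2E E.
by split => i j; rewrite ?H1 ?H2.
Qed.
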